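(* $H_1(\Lambda_1(\mathbb{Q}\mathrm{Par}_2);\mathbb{Q})\cong\mathbb{Q}^4$.
   Context: The nonsymmetric operad $\mathrm{Par}_2$: $\mathrm{Par}_2((1))=\{1\}$, and for $m\ge2$, $\mathrm{Par}_2((m))=\{x_1^ax_2^b: a,b\ge1, a+b=m\}$. Partial composition: for $c=x_1^{a_1}x_2^{a_2}$ and $d$ a monomial of degree $j$ (or $d=1$ of degree 1), $c\circ_sd$ multiplies out by raising the exponent of the variable $x_l$ whose block contains $s$ (i.e. $l=1$ if $s\le a_1$, $l=2$ otherwise) by $j-1$; $1$ is a two-sided unit. $\Lambda_1(\mathbb{Q}\mathrm{Par}_2)=\bigoplus_{m\ge2}\mathbb{Q}\mathrm{Par}_2((m))$ with Lie bracket $[c,d]=\sum_{t=1}^{j}d\circ_tc-\sum_{s=1}^{k}c\circ_sd$ for $c$ of degree $k$, $d$ of degree $j$. $H_1$ is Lie algebra homology, i.e. the abelianization. *)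

(* Defs.v *)
(* Q Par_2 in arities >= 2 is modelled inside the polynomial ring Q[x1,x2]:
   the basis element x1^a x2^b of Par_2((a+b)) is the monomial x1^a x2^b.
   Lambda_1(Q Par_2) is the subspace of {mpoly rat[2]} spanned by the monomials
   with both exponents >= 1. *)
From HB Require Import structures.
From mathcomp Require Import all_boot all_order all_algebra.
From mathcomp Require Import mpoly.
Set Implicit Arguments. Unset Strict Implicit. Unset Printing Implicit Defensive.
Import Order.TTheory GRing.Theory Num.Theory.
Local Open Scope ring_scope.

Definition x1 : 'I_2 := ord0.
Definition x2 : 'I_2 := ord_max.

Definition mono (a b : nat) : {mpoly rat[2]} := 'X_x1 ^+ a * 'X_x2 ^+ b.

(* partial composition c o_s d for c = x1^a1 x2^a2 and d a monomial of degree j: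
   raise the exponent of the variable whose block contains s by j-1 *)
Definition pcomp (a1 a2 s j : nat) : {mpoly rat[2]} :=
  if (s <= a1)%N then mono (a1 + j - 1) a2 else mono a1 (a2 + j - 1).

(* Lie bracket on basis elements c = x1^a1 x2^a2 (degree k), d = x1^b1 x2^b2
   (degree j):  [c,d] = sum_{t=1}^{j} d o_t c - sum_{s=1}^{k} c o_s d *)
Definition brmono (a1 a2 b1 b2 : nat) : {mpoly rat[2]} :=
  \sum_(1 <= t < (b1 + b2).+1) pcomp b1 b2 t (a1 + a2)
  - \sum_(1 <= s < (a1 + a2).+1) pcomp a1 a2 s (b1 + b2).

Definition br (p q : {mpoly rat[2]}) : {mpoly rat[2]} :=
  \sum_(m <- msupp p) \sum_(n <- msupp q)
     (p@_m * q@_n) *: brmono (m x1) (m x2) (n x1) (n x2).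

Definition inL (p : {mpoly rat[2]}) : bool :=
  all (fun m : 'X_{1..2} => (0 < m x1)%N && (0 < m x2)%N) (msupp p).

Definition inDerived (p : {mpoly rat[2]}) : Prop :=
  exists s : seq (rat * {mpoly rat[2]} * {mpoly rat[2]}),
    all (fun x => inL x.1.2 && inL x.2) s /\
    p = \sum_(x <- s) x.1.1 *: br x.1.2 x.2.

(* H_1(L; Q) = L / [L, L] is isomorphic to Q^n : there is a Q-linear map
   from L onto Q^n whose kernel is exactly [L, L]. *)
Definition H1_iso_Qn (n : nat) : Prop :=
  exists phi : {mpoly rat[2]} -> 'rV[rat]_n,
    (forall (a : rat) p q, inL p -> inL q -> phi (a *: p + q) = a *: phi p + phi q) /\
    (forall v : 'rV[rat]_n, exists2 p, inL p & phi p = v) /\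
    (forall p, inL p -> (phi p = 0 <-> inDerived p)).

(* Main.v *)
Require Import Defs.
From mathcomp Require Import all_boot all_order all_algebra.
From mathcomp Require Import mpoly.
From mathcomp Require Import ring lra zify.
Set Implicit Arguments. Unset Strict Implicit. Unset Printing Implicit Defensive.
Import Order.TTheory GRing.Theory Num.Theory.
Local Open Scope ring_scope.

Definition mn (a b : nat) : 'X_{1..2} := (U_(x1) *+ a + U_(x2) *+ b)%MM.

Lemma monoE a b : mono a b = 'X_[mn a b].
Proof. by rewrite /mono /mn mpolyXD -!mpolyXn. Qed.

Lemma mn1 a b : mn a b x1 = a.
Proof. by rewrite /mn mnmDE !mulmnE !mnm1E /=; lia. Qed.
Lemma mn2 a b : mn a b x2 = b.
Proof. by rewrite /mn mnmDE !mulmnE !mnm1E /=; lia. Qed.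

Lemma mn_eta (m : 'X_{1..2}) : m = mn (m x1) (m x2).
Proof.
apply/mnmP => -[[|[|i]] Hi] //.
- have -> : Ordinal Hi = x1 by apply/val_inj.
  by rewrite mn1.
- have -> : Ordinal Hi = x2 by apply/val_inj.
  by rewrite mn2.
Qed.



Lemma coef_mono a b m : (mono a b)@_m = ((a == m x1) && (b == m x2))%:R.
Proof.
rewrite monoE mcoeffX; congr (_%:R).
case: (eqVneq (mn a b) m) => [<-|H]; first by rewrite mn1 mn2 !eqxx.
case: andP => // -[/eqP Ea /eqP Eb].
by move/eqP: H; case; rewrite [m]mn_eta Ea Eb.
Qed.

Lemma sum_pcomp a1 a2 j :
  \sum_(1 <= s < (a1+a2).+1) Defs.pcomp a1 a2 s j =
  a1%:R *: mono (a1+j-1) a2 + a2%:R *: mono a1 (a2+j-1).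
Proof.
rewrite (big_cat_nat _ (n:=a1.+1)) //=; last by lia.
rewrite (eq_big_nat _ _ (F2 := fun=> mono (a1+j-1) a2)); last first.
  by move=> i /andP [_ Hi]; rewrite /Defs.pcomp ifT.
rewrite [X in _ + X](eq_big_nat _ _ (F2 := fun=> mono a1 (a2+j-1))); last first.
  by move=> i /andP [Hi _]; rewrite /Defs.pcomp ifF //; lia.
by rewrite !sumr_const_nat !scaler_nat; congr (_ *+ _ + _ *+ _); lia.
Qed.

Lemma brmonoE a1 a2 b1 b2 : brmono a1 a2 b1 b2 =
  b1%:R *: mono (b1+(a1+a2)-1) b2 + b2%:R *: mono b1 (b2+(a1+a2)-1)
  - (a1%:R *: mono (a1+(b1+b2)-1) a2 + a2%:R *: mono a1 (a2+(b1+b2)-1)).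
Proof. by rewrite /brmono !sum_pcomp. Qed.

Definition goodm (m : 'X_{1..2}) := (0 < m x1)%N && (0 < m x2)%N.

Lemma inLP p : inL p <-> (forall m, ~~ goodm m -> p@_m = 0).
Proof.
split.
- move=> /allP H m Hm; apply: memN_msupp_eq0; apply: contra Hm; exact: H.
- move=> H; apply/allP => m; rewrite mcoeff_msupp => Hm.
  apply/negPn; apply: contra Hm => Hm; apply/eqP; exact: H.
Qed.

Lemma inL_mono a b : (0 < a)%N -> (0 < b)%N -> inL (mono a b).
Proof. by move=> Ha Hb; rewrite /inL monoE msuppX /= mn1 mn2 Ha Hb. Qed.

Lemma D0 : inDerived 0.
Proof. by exists [::]; rewrite big_nil. Qed.

Lemma DD p q : inDerived p -> inDerived q -> inDerived (p + q).
Proof.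
move=> [s [Hs ->]] [t [Ht ->]]; exists (s ++ t); split.
  by rewrite all_cat Hs Ht.
by rewrite big_cat.
Qed.

Lemma DZ c p : inDerived p -> inDerived (c *: p).
Proof.
move=> [s [Hs ->]]; exists (map (fun x => (c * x.1.1, x.1.2, x.2)) s); split.
  by rewrite all_map.
by rewrite big_map scaler_sumr; apply: eq_bigr => x _; rewrite scalerA.
Qed.

Lemma DN p : inDerived p -> inDerived (- p).
Proof. by move=> H; rewrite -scaleN1r; apply: DZ. Qed.

Lemma DB p q : inDerived p -> inDerived q -> inDerived (p - q).
Proof. by move=> Hp Hq; apply: DD => //; apply: DN. Qed.

Lemma DMn p k : inDerived p -> inDerived (p *+ k).
Proof. by move=> H; rewrite -scaler_nat; apply: DZ. Qed.

Lemma Dsum (I : Type) (r : seq I) (F : I -> {mpoly rat[2]}) :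
  (forall i, inDerived (F i)) -> inDerived (\sum_(i <- r) F i).
Proof. by move=> H; elim/big_ind: _ => //; [exact: D0 | exact: DD]. Qed.

Lemma br_mono a1 a2 b1 b2 : br (mono a1 a2) (mono b1 b2) = brmono a1 a2 b1 b2.
Proof.
by rewrite /br !monoE !msuppX !big_seq1 !mcoeffX !eqxx mulr1 scale1r !mn1 !mn2.
Qed.

Lemma Dbr a1 a2 b1 b2 : (0 < a1)%N -> (0 < a2)%N -> (0 < b1)%N -> (0 < b2)%N ->
  inDerived (brmono a1 a2 b1 b2).
Proof.
move=> *; exists [:: (1, mono a1 a2, mono b1 b2)]; split.
  by rewrite /= !inL_mono.
by rewrite big_seq1 scale1r br_mono.
Qed.
Lemma mono_congr a b a' b' : a = a' -> b = b' -> mono a b = mono a' b'.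
Proof. by move=> -> ->. Qed.
Ltac normbr := rewrite brmonoE; repeat match goal with [x := _ |- _] => rewrite /x end;
  congr (_ *: _ + _ *: _ - (_ *: _ + _ *: _)); apply: mono_congr; lia.

Lemma DMn_inv p N : (0 < N)%N -> inDerived (p *+ N) -> inDerived p.
Proof.
move=> HN H; have := DZ (N%:R^-1) H.
by rewrite -scaler_nat scalerA mulVf ?scale1r // pnatr_eq0 -lt0n.
Qed.

Lemma DXY k : inDerived (mono 1 (k+4)) /\ inDerived (mono (k+4) 1).
Proof.
set m := (k+2)%N.
set X := mono 1 (k+4). set Y := mono (k+4) 1. set X2 := mono 2 (k+3).
set Y2 := mono (k+3) 2. set X3 := mono 3 m.
have R1 : brmono 1 1 1 (m+1) = 1%:R *: X2 + (m+1)%:R *: X - (1%:R *: Y + 1%:R *: X).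
  by normbr.
have R2 : brmono 1 1 (m+1) 1 = (m+1)%:R *: Y + 1%:R *: Y2 - (1%:R *: Y + 1%:R *: X).
  by normbr.
have R3 : brmono 1 1 2 m = 2%:R *: X3 + m%:R *: X2 - (1%:R *: Y + 1%:R *: X).
  by normbr.
have R5 : brmono 2 1 1 m = 1%:R *: X3 + m%:R *: X - (2%:R *: Y + 1%:R *: X2).
  by normbr.
have R6 : brmono 1 2 1 m = 1%:R *: X3 + m%:R *: X - (1%:R *: Y2 + 2%:R *: X).
  by normbr.
have D1 := @Dbr 1 1 1 (m+1) isT isT isT ltac:(lia).
have D2 := @Dbr 1 1 (m+1) 1 isT isT ltac:(lia) isT.
have D3 := @Dbr 1 1 2 m isT isT isT ltac:(lia).
have D5 := @Dbr 2 1 1 m isT isT isT ltac:(lia).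
have D6 := @Dbr 1 2 1 m isT isT isT ltac:(lia).
rewrite R1 in D1; rewrite R2 in D2; rewrite R3 in D3; rewrite R5 in D5; rewrite R6 in D6.
have HT : inDerived ((X - Y) *+ (m+3)).
  have -> : (X - Y) *+ (m+3) = (1%:R *: X3 + m%:R *: X - (2%:R *: Y + 1%:R *: X2))
     - (1%:R *: X3 + m%:R *: X - (1%:R *: Y2 + 2%:R *: X))
     + (1%:R *: X2 + (m+1)%:R *: X - (1%:R *: Y + 1%:R *: X))
     - ((m+1)%:R *: Y + 1%:R *: Y2 - (1%:R *: Y + 1%:R *: X)).
    rewrite !scaler_nat; ring.
  by apply: DB => //; apply: DD => //; apply: DB.
have HXY : inDerived (X - Y) by apply: (@DMn_inv _ (m+3)) ; [lia|done].
have HX : inDerived (X *+ ((m+4)*(k+1))).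
  have -> : X *+ ((m+4)*(k+1)) =
    (1%:R *: X3 + m%:R *: X - (2%:R *: Y + 1%:R *: X2)) *+ 2
    + (1%:R *: X2 + (m+1)%:R *: X - (1%:R *: Y + 1%:R *: X)) *+ (m+2)
    - (2%:R *: X3 + m%:R *: X2 - (1%:R *: Y + 1%:R *: X))
    - (X - Y) *+ (m+5).
    rewrite !scaler_nat /m; ring.
  apply: DB; last exact: DMn.
  by apply: DB => //; apply: DD; apply: DMn.
have DX : inDerived X by apply: (@DMn_inv _ ((m+4)*(k+1))) ; [lia|done].
split => //.
have -> : Y = X - (X - Y) by rewrite opprB addrCA subrr addr0.
exact: DB.
Qed.

Lemma Dhigh k a b : (0 < a)%N -> (0 < b)%N -> (a + b = k + 5)%N -> inDerived (mono a b).
Proof.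
have [DX DY] := DXY k.
elim: a b => [|a IH] b Ha Hb Hab; first by [].
case: a IH Ha Hab => [|a] IH Ha Hab.
  by have -> : b = (k+4)%N by lia.
have H1 := @Dbr 1 1 a.+1 b isT isT isT Hb.
have IH' := IH b.+1 isT isT ltac:(lia).
have E : brmono 1 1 a.+1 b = a.+1%:R *: mono a.+2 b + b%:R *: mono a.+1 b.+1
   - (1%:R *: mono (k+4) 1 + 1%:R *: mono 1 (k+4)).
  rewrite brmonoE; congr (_ *: _ + _ *: _ - (_ *: _ + _ *: _)); apply: mono_congr; lia.
apply: (@DMn_inv _ a.+1); first by [].
have -> : mono a.+2 b *+ a.+1 = brmono 1 1 a.+1 b - mono a.+1 b.+1 *+ b
   + (mono (k+4) 1 + mono 1 (k+4)).
  by rewrite E !scaler_nat; ring.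
by apply: DD; [apply: DB => //; apply: DMn | apply: DD].
Qed.

Lemma D22 : inDerived (mono 2 2) /\ inDerived (mono 3 1 - mono 1 3).
Proof.
have A := @Dbr 1 1 2 1 isT isT isT isT.
have B := @Dbr 1 1 1 2 isT isT isT isT.
rewrite brmonoE /= in A; rewrite brmonoE /= in B.
split.
  apply: (@DMn_inv _ 2) => //.
  have -> : mono 2 2 *+ 2 = (2%:R *: mono 3 1 + 1%:R *: mono 2 2 - (1%:R *: mono 3 1 + 1%:R *: mono 1 3))
    + (1%:R *: mono 2 2 + 2%:R *: mono 1 3 - (1%:R *: mono 3 1 + 1%:R *: mono 1 3)).
    by rewrite !scaler_nat; ring.
  exact: DD.
apply: (@DMn_inv _ 2) => //.
have -> : (mono 3 1 - mono 1 3) *+ 2 = (2%:R *: mono 3 1 + 1%:R *: mono 2 2 - (1%:R *: mono 3 1 + 1%:R *: mono 1 3))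
  - (1%:R *: mono 2 2 + 2%:R *: mono 1 3 - (1%:R *: mono 3 1 + 1%:R *: mono 1 3)).
  by rewrite !scaler_nat; ring.
exact: DB.
Qed.

Definition cf (p : {mpoly rat[2]}) a b := p@_(mn a b).

Lemma cf_brmono a1 a2 b1 b2 u v : cf (brmono a1 a2 b1 b2) u v =
  b1%:R * (((b1+(a1+a2)-1)%N == u) && (b2 == v))%:R
  + b2%:R * ((b1 == u) && ((b2+(a1+a2)-1)%N == v))%:R
  - (a1%:R * (((a1+(b1+b2)-1)%N == u) && (a2 == v))%:R
  + a2%:R * ((a1 == u) && ((a2+(b1+b2)-1)%N == v))%:R).
Proof. by rewrite /cf brmonoE !mcoeffB !mcoeffD !mcoeffZ !coef_mono !mn1 !mn2. Qed.

Lemma eqb_false x y u v : (x + y != u + v)%N -> ((x == u) && (y == v)) = false.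
Proof. by move=> H; apply/negbTE/negP => /andP [/eqP ? /eqP ?]; subst; rewrite eqxx in H. Qed.

Lemma cf_brmono0 a1 a2 b1 b2 u v : (0 < a1)%N -> (0 < a2)%N -> (0 < b1)%N -> (0 < b2)%N ->
  (u + v <= 4)%N ->
  (u + v < a1 + a2 + b1 + b2 - 1)%N -> cf (brmono a1 a2 b1 b2) u v = 0.
Proof.
move=> *; rewrite cf_brmono !eqb_false; try lia.
by rewrite /=; ring.
Qed.

Ltac smallcases a1 a2 b1 b2 :=
  destruct a1 as [|[|[|a1]]]; destruct a2 as [|[|[|a2]]];
  destruct b1 as [|[|[|b1]]]; destruct b2 as [|[|[|b2]]];
  try (exfalso; lia); rewrite ?cf_brmono /=; ring.

Lemma kill a1 a2 b1 b2 : (0 < a1)%N -> (0 < a2)%N -> (0 < b1)%N -> (0 < b2)%N ->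
  [/\ cf (brmono a1 a2 b1 b2) 1 1 = 0, cf (brmono a1 a2 b1 b2) 2 1 = 0,
      cf (brmono a1 a2 b1 b2) 1 2 = 0 &
      cf (brmono a1 a2 b1 b2) 3 1 + cf (brmono a1 a2 b1 b2) 1 3 = 0].
Proof.
move=> H1 H2 H3 H4; split.
- by rewrite cf_brmono0 //; lia.
- have [Hb|Hs] : (5 <= a1 + a2 + b1 + b2)%N \/ (a1 + a2 + b1 + b2 < 5)%N by lia.
    by rewrite cf_brmono0 //; lia.
  smallcases a1 a2 b1 b2.
- have [Hb|Hs] : (5 <= a1 + a2 + b1 + b2)%N \/ (a1 + a2 + b1 + b2 < 5)%N by lia.
    by rewrite cf_brmono0 //; lia.
  smallcases a1 a2 b1 b2.
- have [Hb|Hs] : (6 <= a1 + a2 + b1 + b2)%N \/ (a1 + a2 + b1 + b2 < 6)%N by lia.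
    by rewrite !cf_brmono0 ?addr0 //; lia.
  smallcases a1 a2 b1 b2.
Qed.

Lemma cfL a p q u v : cf (a *: p + q) u v = a * cf p u v + cf q u v.
Proof. by rewrite /cf mcoeffD mcoeffZ. Qed.

Lemma cf_mono a b u v : cf (mono a b) u v = ((a == u) && (b == v))%:R.
Proof. by rewrite /cf coef_mono mn1 mn2. Qed.

Lemma eq_mn a b c d : (mn a b == mn c d) = (a == c) && (b == d).
Proof.
apply/eqP/andP => [E|[/eqP -> /eqP ->]] //.
by split; apply/eqP; [rewrite -(mn1 a b) E mn1 | rewrite -(mn2 a b) E mn2].
Qed.

Lemma coef_extract (p : {mpoly rat[2]}) (u : 'X_{1..2}) : \sum_(m <- msupp p) p@_m * (m == u)%:R = p@_u.
Proof.
rewrite [in RHS](mpolyE p) raddf_sum /=; apply: eq_bigr => m _.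
by rewrite mcoeffZ mcoeffX.
Qed.

Lemma der_coef (P : {mpoly rat[2]} -> rat)
  (HP : forall a p q, P (a *: p + q) = a * P p + P q)
  (Hk : forall a1 a2 b1 b2, (0 < a1)%N -> (0 < a2)%N -> (0 < b1)%N -> (0 < b2)%N ->
        P (brmono a1 a2 b1 b2) = 0) p :
  inDerived p -> P p = 0.
Proof.
have P0 : P 0 = 0.
  have := HP 1 0 0; rewrite scale1r addr0 mul1r => H.
  by apply: (addrI (P 0)); rewrite addr0 -H.
have PZ c q : P (c *: q) = c * P q by rewrite -[c *: q]addr0 HP P0 addr0.
have PS (I : Type) (r : seq I) F : P (\sum_(i <- r) F i) = \sum_(i <- r) P (F i).
  elim: r => [|x r IH]; first by rewrite !big_nil.
  by rewrite !big_cons -IH -[in LHS](scale1r (F x)) HP mul1r.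
move=> [s [Hs ->]]; rewrite PS big_seq big1 // => x Hx.
move/allP: Hs => /(_ x Hx) /andP [Hy Hz].
rewrite PZ /br PS big_seq big1 ?mulr0 // => m Hm.
rewrite PS big_seq big1 // => n Hn.
move/allP: Hy => /(_ m Hm) /andP [Hm1 Hm2].
move/allP: Hz => /(_ n Hn) /andP [Hn1 Hn2].
by rewrite PZ Hk ?mulr0.
Qed.

Definition rr (m : 'X_{1..2}) : {mpoly rat[2]} :=
  (m == mn 1 1)%:R *: mono 1 1 + (m == mn 2 1)%:R *: mono 2 1
  + (m == mn 1 2)%:R *: mono 1 2
  + ((m == mn 3 1)%:R + (m == mn 1 3)%:R) *: mono 1 3.

Lemma Dgood a b : (0 < a)%N -> (0 < b)%N -> inDerived (mono a b - rr (mn a b)).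
Proof.
move=> Ha Hb; have [D2 D31] := D22.
have [Hbig|Hs] : (5 <= a + b)%N \/ (a + b < 5)%N by lia.
  rewrite /rr !eq_mn !eqb_false; try lia.
  rewrite /= !scale0r !addr0 subr0.
  by apply: (@Dhigh (a + b - 5)) => //; lia.
destruct a as [|[|[|[|a]]]]; destruct b as [|[|[|[|b]]]]; try (exfalso; lia);
  rewrite /rr !eq_mn /= ?scale0r ?scale1r ?add0r ?addr0 ?subrr ?add0r.
all: rewrite ?subr0 ?subrr /=; try exact: D0; try exact: D2; exact: D31.
Qed.

Definition phi (p : {mpoly rat[2]}) : 'rV[rat]_4 :=
  \row_(i < 4) nth 0 [:: cf p 1 1; cf p 2 1; cf p 1 2; cf p 3 1 + cf p 1 3] i.

Lemma cfD p q u v : cf (p + q) u v = cf p u v + cf q u v.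
Proof. by rewrite /cf mcoeffD. Qed.
Lemma cfZ a p u v : cf (a *: p) u v = a * cf p u v.
Proof. by rewrite /cf mcoeffZ. Qed.

Theorem corollary6p2 : H1_iso_Qn 4.
Proof.
exists phi; split; [|split].
- move=> a p q _ _; apply/rowP => -[[|[|[|[|i]]]] Hi]; rewrite !mxE /= ?cfL //; try ring.
- move=> v.
  have E : forall i (Hi : (i < 4)%N), v 0 (Ordinal Hi) = v 0 (inord i).
    by move=> i Hi; congr (v _ _); apply: val_inj; rewrite /= inordK.
  exists (v 0 (inord 0) *: mono 1 1 + v 0 (inord 1) *: mono 2 1
          + v 0 (inord 2) *: mono 1 2 + v 0 (inord 3) *: mono 3 1).
    apply/inLP => m; rewrite /goodm negb_and -!eqn0Ngt => /orP [] /eqP Hm;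
      by rewrite !mcoeffD !mcoeffZ !coef_mono Hm ?andbF /= !mulr0 !addr0.
  apply/rowP => -[[|[|[|[|i]]]] Hi]; rewrite !mxE /= ?E // !cfD !cfZ !cf_mono /=; ring.
- move=> p Hp; split.
  + move=> H0.
    have C i (Hi : (i < 4)%N) : nth 0 [:: cf p 1 1; cf p 2 1; cf p 1 2; cf p 3 1 + cf p 1 3] i = 0.
      by have := congr1 (fun w : 'rV[rat]_4 => w 0 (Ordinal Hi)) H0; rewrite !mxE.
    have C11 := C 0%N isT; have C21 := C 1%N isT; have C12 := C 2%N isT; have C31 := C 3%N isT.
    rewrite /= in C11 C21 C12 C31.
    rewrite (mpolyE p).
    have -> : \sum_(m <- msupp p) p@_m *: 'X_[m] =
       \sum_(m <- msupp p) p@_m *: ('X_[m] - rr m) + \sum_(m <- msupp p) p@_m *: rr m.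
      by rewrite -big_split; apply: eq_bigr => m _; rewrite /= -scalerDr subrK.
    apply: DD.
      rewrite big_seq; apply: (big_ind (fun q => inDerived q)); [exact: D0|exact: DD|].
      move=> m Hm; apply: DZ.
      move/allP: Hp => /(_ m Hm) /andP [H1 H2].
      rewrite [m]mn_eta -monoE; exact: Dgood.
    have -> : \sum_(m <- msupp p) p@_m *: rr m = 0.
      under eq_bigr => m _ do rewrite /rr !scalerDr !scalerA mulrDr.
      rewrite !big_split /= -!scaler_suml !coef_extract.
      have e : forall u v, p@_(mn u v) = cf p u v by [].
      by rewrite !e C11 C21 C12 big_split /= !coef_extract !e C31 !scale0r !addr0.
    exact: D0.
  + move=> HD; apply/rowP => -[[|[|[|[|i]]]] Hi]; rewrite !mxE //=.
    * apply: (@der_coef (fun q => cf q 1 1)) HD => [a q r|a1 a2 b1 b2 *]; first by rewrite cfL.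
      by have [] := @kill a1 a2 b1 b2.
    * apply: (@der_coef (fun q => cf q 2 1)) HD => [a q r|a1 a2 b1 b2 *]; first by rewrite cfL.
      by have [] := @kill a1 a2 b1 b2.
    * apply: (@der_coef (fun q => cf q 1 2)) HD => [a q r|a1 a2 b1 b2 *]; first by rewrite cfL.
      by have [] := @kill a1 a2 b1 b2.
    * apply: (@der_coef (fun q => cf q 3 1 + cf q 1 3)) HD => [a q r|a1 a2 b1 b2 *].
        by rewrite !cfL; ring.
      by have [] := @kill a1 a2 b1 b2.
Qed.
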